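(* Let $S=\{(x_1,x_2)\in\mathbb{R}^2:x_1\ge0,\ x_1^2-x_2^3\ge0\}$ and $G=\{X_1,X_1^2-X_2^3\}$. Then for every integer $k\ge1$, $\mathrm{TH}_k(G)=\overline{\Omega_k(G)}=\{(x_1,x_2)\in\mathbb{R}^2:x_1\ge0\}$ (for $k\ge2$ in the case of $\Omega_k$), whereas $\mathrm{conv}(S)=S\neq\{x_1\ge0\}$; hence neither hierarchy converges to $\overline{\mathrm{conv}(S)}$.
   Context: For a finite set $H=\{h_1,\dots,h_r\}\subseteq\mathbb{R}[X_1,X_2]$, $\mathcal{Q}_k(H)=\{\sum_{j=0}^r\sigma_jh_j:h_0=1,\ \sigma_j\text{ sums of squares},\ \deg(\sigma_jh_j)\le2k\}$. $\mathrm{TH}_k(G)=\{x:p(x)\ge0\ \forall p\in\mathcal{Q}_k(G)\text{ of degree}\le1\}$. For $y=(y_\alpha)_{\alpha\in\mathbb{N}^2,|\alpha|\le2k}$, $L_y(\sum q_\alpha X^\alpha)=\sum q_\alpha y_\alpha$, $M_k(y)=(y_{\alpha+\beta})_{|\alpha|,|\beta|\le k}$, and for $p=\sum_\beta p_\beta X^\beta$ with $d_p=\lceil\deg p/2\rceil$, $M_{k-d_p}(py)=(\sum_\beta p_\beta y_{\alpha+\gamma+\beta})_{|\alpha|,|\gamma|\le k-d_p}$. $\Omega_k(G)=\{x:\exists y,\ L_y(1)=1,\ L_y(X_i)=x_i,\ M_k(y)\succeq0,\ M_{k-1}(X_1y)\succeq0,\ M_{k-2}((X_1^2-X_2^3)y)\succeq0\}$.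 *)

(* Defs.v *)
(* Bivariate real polynomials are represented as
   {poly {poly R}}: the inner variable is X1, the outer variable is X2. *)
From HB Require Import structures.
From mathcomp Require Import all_boot all_order all_algebra.
Set Implicit Arguments. Unset Strict Implicit. Unset Printing Implicit Defensive.
Import Order.TTheory GRing.Theory Num.Theory.
Local Open Scope ring_scope.

Section Defs.
Variable R : rcfType.

Definition bipoly := {poly {poly R}}.

Definition X1 : bipoly := ('X)%:P.
Definition X2 : bipoly := 'X.

Definition coef2 (p : bipoly) (a b : nat) : R := (p`_b)`_a.

Definition deg_le (p : bipoly) (d : nat) : Prop :=
  forall a b : nat, (d < a + b)%N -> coef2 p a b = 0.

Definition eval2 (p : bipoly) (x : R * R) : R := (p.[x.2%:P]).[x.1].

Definition sos (s : bipoly) : Prop :=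
  exists qs : seq bipoly, s = \sum_(q <- qs) q ^+ 2.

Definition inQk (k : nat) (H : seq bipoly) (p : bipoly) : Prop :=
  exists (s0 : bipoly) (ss : seq bipoly),
    size ss = size H /\
    sos s0 /\ deg_le s0 (2 * k) /\
    (forall i, (i < size H)%N -> sos ss`_i /\ deg_le (ss`_i * H`_i) (2 * k)) /\
    p = s0 + \sum_(i < size H) ss`_i * H`_i.

Definition TH (k : nat) (H : seq bipoly) (x : R * R) : Prop :=
  forall p : bipoly, inQk k H p -> deg_le p 1 -> 0 <= eval2 p x.

Definition g2 : bipoly := X1 ^+ 2 - X2 ^+ 3.
Definition G : seq bipoly := [:: X1; g2].

(* moment sequences: y a b stands for y_(a,b); only entries with a + b <= 2k
   are ever used below *)
Definition mseq := nat -> nat -> R.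

Definition Lsh (y : mseq) (p : bipoly) (s : nat * nat) : R :=
  \sum_(b < size p) \sum_(a < size p`_b) (p`_b)`_a * y (a + s.1)%N (b + s.2)%N.

Definition Ly (y : mseq) (p : bipoly) : R := Lsh y p (0%N, 0%N).

Definition mons (d : nat) : seq (nat * nat) :=
  [seq ab <- [seq (a, b) | a <- iota 0 d.+1, b <- iota 0 d.+1] | (ab.1 + ab.2 <= d)%N].

Definition mon (d : nat) (i : nat) : nat * nat := nth (0%N, 0%N) (mons d) i.

Definition addm (u v : nat * nat) : nat * nat := ((u.1 + v.1)%N, (u.2 + v.2)%N).

Definition momMx (d : nat) (y : mseq) : 'M[R]_(size (mons d)) :=
  \matrix_(i, j) (let s := addm (mon d i) (mon d j) in y s.1 s.2).

Definition locMx (d : nat) (p : bipoly) (y : mseq) : 'M[R]_(size (mons d)) :=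
  \matrix_(i, j) Lsh y p (addm (mon d i) (mon d j)).

Definition psd (n : nat) (M : 'M[R]_n) : Prop :=
  forall v : 'cV[R]_n, 0 <= (v^T *m M *m v) 0 0.

Definition Omega (k : nat) (x : R * R) : Prop :=
  exists y : mseq,
    Ly y 1 = 1 /\ Ly y X1 = x.1 /\ Ly y X2 = x.2 /\
    psd (momMx k y) /\ psd (locMx (k - 1) X1 y) /\ psd (locMx (k - 2) g2 y).

Definition cl2 (A : R * R -> Prop) (x : R * R) : Prop :=
  forall e : R, 0 < e ->
    exists z, A z /\ `|z.1 - x.1| < e /\ `|z.2 - x.2| < e.

Definition conv2 (A : R * R -> Prop) (x : R * R) : Prop :=
  exists (n : nat) (pts : 'I_n -> R * R) (lam : 'I_n -> R),
    (forall i, A (pts i)) /\ (forall i, 0 <= lam i) /\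
    \sum_(i < n) lam i = 1 /\
    x = (\sum_(i < n) lam i * (pts i).1, \sum_(i < n) lam i * (pts i).2).

Definition Sset (x : R * R) : Prop := 0 <= x.1 /\ 0 <= x.1 ^+ 2 - x.2 ^+ 3.
Definition halfplane (x : R * R) : Prop := 0 <= x.1.

End Defs.

(* Main.v *)
Require Import Defs.
From HB Require Import structures.
From mathcomp Require Import all_boot all_order all_algebra.
From mathcomp Require Import ring lra.
Set Implicit Arguments. Unset Strict Implicit. Unset Printing Implicit Defensive.
Import Order.TTheory GRing.Theory Num.Theory.
Local Open Scope ring_scope.

Section S.
Variable R : rcfType.
Implicit Types (p q : bipoly R) (x : R * R).



Lemma eval2M p q x : eval2 (p * q) x = eval2 p x * eval2 q x.
Proof. by rewrite /eval2 !hornerM. Qed.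
Lemma eval2D p q x : eval2 (p + q) x = eval2 p x + eval2 q x.
Proof. by rewrite /eval2 !hornerD. Qed.
Lemma eval2B p q x : eval2 (p - q) x = eval2 p x - eval2 q x.
Proof. by rewrite /eval2 !hornerD !hornerN. Qed.
Lemma eval2_X1 x : eval2 (X1 R) x = x.1.
Proof. by rewrite /eval2 /X1 hornerC hornerX. Qed.
Lemma eval2_X2 x : eval2 (X2 R) x = x.2.
Proof. by rewrite /eval2 /X2 hornerX hornerC. Qed.
Lemma eval2_1 x : eval2 1 x = 1.
Proof. by rewrite /eval2 !hornerC. Qed.
Lemma eval2X p n x : eval2 (p ^+ n) x = eval2 p x ^+ n.
Proof. by rewrite /eval2 !horner_exp. Qed.
Lemma eval2_g2 x : eval2 (g2 R) x = x.1 ^+ 2 - x.2 ^+ 3.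
Proof. by rewrite /g2 eval2B !eval2X eval2_X1 eval2_X2. Qed.
Lemma eval2_sum (I : Type) (r : seq I) (F : I -> bipoly R) x :
  eval2 (\sum_(i <- r) F i) x = \sum_(i <- r) eval2 (F i) x.
Proof. by rewrite /eval2 !horner_sum. Qed.

Lemma sos_ge0 s x : sos s -> 0 <= eval2 s x.
Proof.
case=> qs ->; rewrite eval2_sum; apply: sumr_ge0 => q _.
by rewrite eval2X sqr_ge0.
Qed.

Lemma S_tangent x : Sset x -> forall t : R, 0 < t -> 3 * t * x.2 <= t ^+ 3 + 2 * x.1.
Proof.
case: x => a b [/= ha hg] t ht.
have [hb|hb] := lerP b 0.
  have : 0 <= t ^+ 3 by rewrite exprn_ge0 // ltW.
  nra.
set s := Num.sqrt b.
have s0 : 0 < s by rewrite sqrtr_gt0.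
have ss : s ^+ 2 = b by rewrite sqr_sqrtr // ltW.
have has : s ^+ 3 <= a.
  rewrite leNgt; apply/negP => H.
  have e : (s ^+ 2) ^+ 3 = (s ^+ 3) ^+ 2 by rewrite -!exprM mulnC.
  have h3 : 0 <= s ^+ 3 by rewrite exprn_ge0 // ltW.
  move: hg; rewrite -ss e; nra.
have h1 : 0 <= (t - s) ^+ 2 * (t + 2 * s) by rewrite mulr_ge0 ?sqr_ge0 //; lra.
rewrite -ss; nra.
Qed.

Lemma tangent_S x : 0 <= x.1 -> (forall t : R, 0 < t -> 3 * t * x.2 <= t ^+ 3 + 2 * x.1) -> Sset x.
Proof.
case: x => a b /= ha H; split => //=.
have [hb|hb] := lerP b 0.
  have : 0 <= b ^+ 2 by rewrite sqr_ge0.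
  rewrite exprS; nra.
set s := Num.sqrt b.
have s0 : 0 < s by rewrite sqrtr_gt0.
have ss : s ^+ 2 = b by rewrite sqr_sqrtr // ltW.
have := H s s0; rewrite -ss => h.
have h2 : s ^+ 3 <= a by nra.
have e : (s ^+ 2) ^+ 3 = (s ^+ 3) ^+ 2 by rewrite -!exprM mulnC.
have h3 : 0 <= s ^+ 3 by rewrite exprn_ge0 // ltW.
rewrite e; nra.
Qed.

Lemma conv2S x : conv2 (@Sset R) x <-> Sset x.
Proof.
split; last first.
  move=> hx; exists 1%N, (fun=> x), (fun=> 1); split => //; split; first by move=> _; exact: ler01.
  by rewrite !big_ord1 !mul1r; case: x {hx}.
case=> n [pts [lam [hS [hl [hs ->]]]]].
apply: tangent_S => /=.
  apply: sumr_ge0 => i _; apply: mulr_ge0 => //; exact: (hS i).1.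
move=> t ht; rewrite -subr_ge0.
have <- : \sum_(i < n) lam i * (t ^+ 3 + 2 * (pts i).1 - 3 * t * (pts i).2) =
   t ^+ 3 + 2 * (\sum_(i < n) lam i * (pts i).1) - 3 * t * (\sum_(i < n) lam i * (pts i).2).
  rewrite (eq_bigr (fun i => t ^+ 3 * lam i + 2 * (lam i * (pts i).1) - 3 * t * (lam i * (pts i).2))); last by move=> i _; ring.
  by rewrite sumrB big_split /= -!mulr_sumr hs mulr1.
apply: sumr_ge0 => i _; apply: mulr_ge0 => //; rewrite subr_ge0; exact: S_tangent.
Qed.

Definition goodp (A : {poly R}) := A = 0 \/ (odd (size A) /\ 0 < lead_coef A).

Lemma goodp_sq (q : {poly R}) : goodp (q ^+ 2).
Proof.
have [->|q0] := eqVneq q 0; first by left; rewrite expr0n.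
right; rewrite expr2 size_mul // lead_coefM; split.
  have : (0 < size q)%N by rewrite size_poly_gt0.
  case: (size q) => // n _; by rewrite addSn addnS /= oddD addbb.
by rewrite -expr2 lt_def sqr_ge0 andbT sqrf_eq0 lead_coef_eq0.
Qed.

Lemma coef_neq0_size (A : {poly R}) i : A`_i != 0 -> (i < size A)%N.
Proof. by rewrite ltnNge; apply: contra => /(nth_default 0) ->. Qed.

Lemma goodpD A B : goodp A -> goodp B -> goodp (A + B).
Proof.
case=> [->|[oA lA]]; first by rewrite add0r.
case=> [->|[oB lB]]; first by rewrite addr0; right.
right.
have [AB|BA|e] := ltngtP (size B) (size A).
- by rewrite size_polyDl // lead_coefDl.
- by rewrite addrC size_polyDl // lead_coefDl.
have sA : (0 < size A)%N by case: (size A) oA.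
have c : (A + B)`_(size A).-1 = lead_coef A + lead_coef B.
  by rewrite coefD /lead_coef e.
have hs : size (A + B) = size A.
  apply/eqP; rewrite eqn_leq; apply/andP; split.
    by apply: leq_trans (size_polyD _ _) _; rewrite -e maxnn.
  have : (A + B)`_(size A).-1 != 0 by rewrite c lt0r_neq0 // addr_gt0.
  by move/coef_neq0_size; case: (size A) sA.
by rewrite hs; split => //; rewrite /lead_coef hs c addr_gt0.
Qed.

Lemma goodp_sum (qs : seq {poly R}) : goodp (\sum_(q <- qs) q ^+ 2).
Proof.
elim: qs => [|q qs IH]; first by rewrite big_nil; left.
by rewrite big_cons; apply: goodpD => //; apply: goodp_sq.
Qed.

Definition phi : bipoly R -> {poly R} := map_poly (horner_eval (0 : R)).

Lemma phi_sos s : sos s -> exists qs : seq {poly R}, phi s = \sum_(q <- qs) q ^+ 2.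
Proof.
case=> qs ->; exists (map phi qs); rewrite big_map /phi rmorph_sum.
by apply: eq_bigr => q _; rewrite rmorphXn.
Qed.

Lemma phi_coef p j : (phi p)`_j = coef2 p 0 j.
Proof. by rewrite /phi coef_map /= horner_evalE horner_coef0. Qed.

Lemma deg1_coef01 p s0 s1 s2 :
  deg_le p 1 -> sos s0 -> sos s2 ->
  p = s0 + (s1 * X1 R + s2 * g2 R) -> coef2 p 0 1 = 0.
Proof.
move=> hp h0 h2 ep.
have sp : (size (phi p) <= 2)%N.
  by apply/leq_sizeP => j hj; rewrite phi_coef hp.
have [qa ea] := phi_sos h0; have [qb eb] := phi_sos h2.
have gA := goodp_sum qa; have gB := goodp_sum qb.
rewrite -ea in gA; rewrite -eb in gB.
have ephi : phi p = phi s0 - phi s2 * 'X^3.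
  rewrite ep /phi !rmorphD !rmorphM /= /X1 /g2 /X2 rmorphB /= !rmorphXn /=.
  by rewrite map_polyC map_polyX /= horner_evalE hornerX polyC0 mulr0 expr0n /= sub0r mulrN add0r.
set A := phi s0 in gA ephi; set B := phi s2 in gB ephi.
have B0 : B = 0.
  case: gB => // -[oB lB]; exfalso.
  have B0 : B != 0 by rewrite -lead_coef_eq0 lt0r_neq0.
  have sB : size (B * 'X^3) = (3 + size B)%N by rewrite size_mulXn.
  have oBX : ~~ odd (size (B * 'X^3)) by rewrite sB oddD oB.
  have : (4 <= size (phi p))%N.
    rewrite ephi; case: gA => [->|[oA _]].
      by rewrite sub0r size_polyN sB; case: (size B) oB.
    have [h|h|h] := ltngtP (size (B * 'X^3)) (size A).
    - rewrite size_polyDl ?size_polyN //; apply: leq_trans h; rewrite sB; by case: (size B) oB.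
    - rewrite addrC size_polyDl ?size_polyN // sB; by case: (size B) oB.
    - by move: oBX; rewrite h oA.
  by move=> h; move: (leq_trans h sp).
have eA : phi p = A by rewrite ephi B0 mul0r subr0.
rewrite -phi_coef eA.
case: gA => [->|[oA _]]; first by rewrite coef0.
apply: nth_default; move: sp; rewrite eA.
by case: (size A) oA => [|[|[|n]]].
Qed.

Lemma coef2_X1 a b : coef2 (X1 R) a b = ((a == 1%N) && (b == 0%N))%:R.
Proof.
rewrite /coef2 /X1 coefC; case: b => [|b] /=; last by rewrite coef0 andbF.
by rewrite coefX andbT.
Qed.

Lemma deg_le_size p d : deg_le p d -> (size p <= d.+1)%N /\ forall b : nat, leq (size p`_b) d.+1.
Proof.
move=> hp; split.
  apply/leq_sizeP => j hj; apply/polyP => a; rewrite coef0; apply: hp.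
  by apply: leq_trans hj (leq_addl _ _).
move=> b; apply/leq_sizeP => j hj; apply: hp; exact: leq_trans hj (leq_addr _ _).
Qed.

Lemma eval2_deg1 p x : deg_le p 1 ->
  eval2 p x = coef2 p 0 0 + coef2 p 1 0 * x.1 + coef2 p 0 1 * x.2.
Proof.
move=> hp; have [s1 s2] := deg_le_size hp.
rewrite /eval2 (horner_coef_wide _ s1) !big_ord_recr big_ord0 /= add0r hornerD !hornerM.
rewrite !hornerC (horner_coef_wide _ (s2 0%N)) (horner_coef_wide _ (s2 1%N)).
rewrite !big_ord_recr !big_ord0 /= !add0r.
have -> : (p`_1)`_1 = 0 by apply: hp.
rewrite /coef2; simpl; lra.
Qed.

Lemma TH_half k x : (1 <= k)%N -> TH k (G R) x <-> halfplane x.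
Proof.
move=> k1; split.
  move=> H; rewrite /halfplane -(eval2_X1 x); apply: H.
    exists 0, [:: 1; 0]; split => //; split; first by exists [::]; rewrite big_nil.
    split; first by move=> a b _; rewrite /coef2 !coef0.
    split; last by rewrite /= big_ord_recr big_ord1 /= mul1r mul0r addr0 add0r.
    case=> [|[|i]] // _; split.
    + by exists [:: 1]; rewrite big_seq1 expr1n.
    + move=> a b hab; rewrite mul1r coef2_X1 /=.
      case: eqP => // ea; case: eqP => // eb; subst; move: hab; rewrite addn0.
      by case: k k1.
    + by exists [::]; rewrite big_nil.
    + by move=> a b _; rewrite mul0r /coef2 !coef0.
  move=> a b hab; rewrite coef2_X1; case: eqP => // ea; case: eqP => // eb.
  by subst; move: hab.
move=> hx p [s0 [ss [hsz [h0 [_ [hi ep]]]]]] hp.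
rewrite /= big_ord_recr big_ord1 /= in ep.
have [h1 _] := hi 1%N isT.
have c01 : coef2 p 0 1 = 0 by apply: (deg1_coef01 hp h0 h1 ep).
have -> : eval2 p x = eval2 p (x.1, 0) by rewrite !eval2_deg1 //= c01 !mul0r.
rewrite ep !eval2D !eval2M eval2_X1 eval2_g2 /=.
apply: addr_ge0; first exact: sos_ge0.
have [h0' _] := hi 0%N isT.
apply: addr_ge0; apply: mulr_ge0; try exact: sos_ge0 => //.
  by [].
by rewrite expr0n /= subr0 sqr_ge0.
Qed.

Lemma mons_cons d : exists r, mons d = (0%N, 0%N) :: r.
Proof. by rewrite /mons /=; eexists. Qed.

Lemma size_mons_gt0 d : (0 < size (mons d))%N.
Proof. by have [r ->] := mons_cons d. Qed.

Lemma mon0 d : mon d 0 = (0%N, 0%N).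
Proof. by rewrite /mon; have [r ->] := mons_cons d. Qed.

Lemma mon_deg d (i : 'I_(size (mons d))) : ((mon d i).1 + (mon d i).2 <= d)%N.
Proof.
have : mon d i \in mons d by rewrite /mon mem_nth.
by rewrite /mons mem_filter => /andP [].
Qed.

Lemma quadE n (M : 'M[R]_n) (v : 'cV[R]_n) :
  (v^T *m M *m v) 0 0 = \sum_i \sum_j v i 0 * M i j * v j 0.
Proof.
rewrite mxE (eq_bigr (fun j => \sum_i v i 0 * M i j * v j 0)); last first.
  by move=> j _; rewrite mxE mulr_suml; apply: eq_bigr => i _; rewrite mxE.
by rewrite exchange_big.
Qed.

Definition mono (x : R * R) (s : nat * nat) := x.1 ^+ s.1 * x.2 ^+ s.2.

Lemma mono_add x s t : mono x (addm s t) = mono x s * mono x t.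
Proof. by rewrite /mono /addm /= !exprD; ring. Qed.

Lemma quad_atomic d M (c : 'I_M -> R) (pt : 'I_M -> R * R) (v : 'cV[R]_(size (mons d))) :
  (v^T *m (\matrix_(i, j) \sum_w c w * mono (pt w) (addm (mon d i) (mon d j))) *m v) 0 0
  = \sum_w c w * (\sum_i v i 0 * mono (pt w) (mon d i)) ^+ 2.
Proof.
rewrite quadE.
under eq_bigr => i _ do under eq_bigr => j _ do rewrite mxE mulr_sumr mulr_suml.
under eq_bigr => i _ do rewrite exchange_big /=.
rewrite exchange_big /=; apply: eq_bigr => w _.
rewrite expr2 mulr_suml mulr_sumr; apply: eq_bigr => i _.
rewrite mulr_sumr mulr_sumr; apply: eq_bigr => j _.
rewrite mono_add; ring.
Qed.

Definition mom M (lam : 'I_M -> R) (pt : 'I_M -> R * R) : mseq R :=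
  fun a b => \sum_w lam w * ((pt w).1 ^+ a * (pt w).2 ^+ b).

Lemma eval2_expand p x :
  eval2 p x = \sum_(b < size p) \sum_(a < size p`_b) (p`_b)`_a * (x.1 ^+ a * x.2 ^+ b).
Proof.
rewrite /eval2 (horner_coef p) horner_sum; apply: eq_bigr => b _.
rewrite hornerM horner_exp hornerC (horner_coef p`_b) mulr_suml.
by apply: eq_bigr => a _; rewrite mulrA.
Qed.

Lemma Lsh_mom M lam pt p s :
  Lsh (@mom M lam pt) p s = \sum_w (lam w * eval2 p (pt w)) * mono (pt w) s.
Proof.
rewrite /Lsh /mom.
under eq_bigr => b _ do under eq_bigr => a _ do rewrite mulr_sumr.
under eq_bigr => b _ do rewrite exchange_big /=.
rewrite exchange_big /=; apply: eq_bigr => w _.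
rewrite eval2_expand mulr_sumr mulr_suml; apply: eq_bigr => b _.
rewrite mulr_sumr mulr_suml; apply: eq_bigr => a _.
rewrite /mono !exprD; ring.
Qed.

Lemma momMx_atomic d M lam pt :
  momMx d (@mom M lam pt) = \matrix_(i, j) \sum_w lam w * mono (pt w) (addm (mon d i) (mon d j)).
Proof. by apply/matrixP => i j; rewrite !mxE. Qed.

Lemma locMx_atomic d p M lam pt :
  locMx d p (@mom M lam pt) =
  \matrix_(i, j) \sum_w (lam w * eval2 p (pt w)) * mono (pt w) (addm (mon d i) (mon d j)).
Proof. by apply/matrixP => i j; rewrite !mxE Lsh_mom. Qed.

Lemma Ly_mom M lam pt p : Ly (@mom M lam pt) p = \sum_w lam w * eval2 p (pt w).
Proof.
rewrite /Ly Lsh_mom; apply: eq_bigr => w _; by rewrite /mono /= !expr0 !mulr1.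
Qed.

Lemma CS n (a b : 'I_n -> R) :
  (\sum_i a i * b i) ^+ 2 <= (\sum_i a i ^+ 2) * (\sum_i b i ^+ 2).
Proof.
have e1 : (\sum_i a i ^+ 2) * (\sum_i b i ^+ 2) = \sum_i \sum_j a i ^+ 2 * b j ^+ 2.
  by rewrite mulr_suml; apply: eq_bigr => i _; rewrite mulr_sumr.
have e2 : (\sum_i a i ^+ 2) * (\sum_i b i ^+ 2) = \sum_i \sum_j a j ^+ 2 * b i ^+ 2.
  by rewrite mulrC mulr_suml; apply: eq_bigr => i _; rewrite mulr_sumr; apply: eq_bigr => j _; rewrite mulrC.
have e3 : (\sum_i a i * b i) ^+ 2 = \sum_i \sum_j (a i * b i) * (a j * b j).
  by rewrite expr2 mulr_suml; apply: eq_bigr => i _; rewrite mulr_sumr.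
have E : \sum_i \sum_j (a i * b j - a j * b i) ^+ 2 =
   (\sum_i \sum_j a i ^+ 2 * b j ^+ 2) + (\sum_i \sum_j a j ^+ 2 * b i ^+ 2)
   - 2 * \sum_i \sum_j (a i * b i) * (a j * b j).
  rewrite mulr_sumr -big_split -sumrB; apply: eq_bigr => i _.
  rewrite mulr_sumr -big_split -sumrB; apply: eq_bigr => j _ /=; ring.
have H : 0 <= \sum_i \sum_j (a i * b j - a j * b i) ^+ 2.
  by apply: sumr_ge0 => i _; apply: sumr_ge0 => j _; apply: sqr_ge0.
rewrite -subr_ge0; lra.
Qed.

Lemma interp N : (0 < N)%N -> exists L : R, 0 <= L /\
  forall P : {poly R}, (size P <= N)%N -> forall s A : R,
    P.[s] ^+ 2 <= L * \sum_(j < N) P.[s + A * (j.+1)%:R] ^+ 2.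
Proof.
move=> N0.
pose xn := fun j : nat => (j.+1)%:R : R.
have xinj : injective xn by move=> i j /eqP; rewrite /xn eqr_nat => /eqP [].
pose l := fun i : 'I_N => (tnth (N.-lagrange xn) i).[0].
exists (\sum_i l i ^+ 2); split; first by apply: sumr_ge0 => i _; apply: sqr_ge0.
move=> P sP s A.
pose q : {poly R} := A%:P * 'X + s%:P.
have sq : (size q <= 2)%N.
  apply/leq_sizeP => j hj; rewrite /q coefD coefCM coefX coefC.
  by case: j hj => [|[|j]] //; rewrite mulr0 addr0.
pose Q := P \Po q.
have sQ : (size Q <= N)%N.
  apply: leq_trans (size_comp_poly_leq _ _) _.
  have h1 : ((size q).-1 <= 1)%N by case: (size q) sq => [|[|[|]]].
  case: (size P) sP => [|m] hm /=; first by rewrite mul0n.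
  by apply: leq_trans hm; rewrite ltnS; apply: leq_trans (leq_mul (leqnn m) h1) _; rewrite muln1.
have qE z : q.[z] = s + A * z by rewrite /q hornerD hornerM hornerC hornerX hornerC addrC.
have HQ := lagrange_gen N0 xinj sQ.
have e0 : P.[s] = \sum_(i < N) Q.[xn i] * l i.
  have -> : P.[s] = Q.[0] by rewrite horner_comp qE mulr0 addr0.
  by rewrite {1}HQ horner_sum; apply: eq_bigr => i _; rewrite hornerM hornerC.
rewrite e0 mulrC; apply: le_trans (CS _ _) _; apply: ler_wpM2r.
  by apply: sumr_ge0 => i _; apply: sqr_ge0.
by rewrite le_eqVlt; apply/orP; left; apply/eqP; apply: eq_bigr => i _; rewrite /Q horner_comp qE.
Qed.

Lemma psd_diag n (M : 'M[R]_n) i : psd M -> 0 <= M i i.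
Proof.
move=> /(_ (\col_j (j == i)%:R)); rewrite quadE.
rewrite (bigD1 i) //= [X in _ + X]big1 => [|j ji]; last first.
  by rewrite big1 // => l _; rewrite !mxE (negPf ji) mul0r mul0r.
rewrite addr0 (bigD1 i) //= [X in _ + X]big1 => [|j ji]; last by rewrite !mxE (negPf ji) mulr0.
by rewrite !mxE eqxx mul1r mulr1 addr0.
Qed.

Lemma Omega_half k x : Omega k x -> 0 <= x.1.
Proof.
case=> y [_ [<- [_ [_ [H _]]]]].
have := psd_diag (Ordinal (size_mons_gt0 (k - 1))) H.
rewrite mxE.
have -> : mon (k - 1) (Ordinal (size_mons_gt0 (k - 1))) = (0%N, 0%N) by exact: mon0.
by [].
Qed.

Lemma psd_g2 d (s t A l0 l1 L : R) :
  0 <= s -> 0 <= A -> 0 <= l0 -> 0 <= l1 -> 0 <= L ->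
  (forall P : {poly R}, (size P <= d.+1)%N ->
     P.[s] ^+ 2 <= L * \sum_(j < d.+1) P.[s + A * (j.+1)%:R] ^+ 2) ->
  l0 * (`|s ^+ 2 - t ^+ 3| * L) <= l1 * (A ^+ 2 - t ^+ 3) ->
  psd (locMx d (g2 R) (@mom d.+2 (fun w => if (w : nat) == 0%N then l0 else l1)
                                  (fun w => (s + A * (w : nat)%:R, t)))).
Proof.
move=> s0 A0 l00 l10 L0 HI Hc v; rewrite locMx_atomic quad_atomic.
pose P : {poly R} := \sum_i (v i 0 * t ^+ (mon d i).2) *: 'X^((mon d i).1).
have PE z : \sum_i v i 0 * mono (z, t) (mon d i) = P.[z].
  rewrite /P horner_sum; apply: eq_bigr => i _.
  by rewrite hornerZ horner_exp hornerX /mono /=; ring.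
have sP : (size P <= d.+1)%N.
  apply/leq_sizeP => j hj; rewrite /P coef_sum big1 // => i _.
  rewrite coefZ coefXn; case: eqP => [ej|]; last by rewrite mulr0.
  have := mon_deg i; rewrite -ej => h.
  have : (d.+1 <= d)%N by apply: leq_trans hj (leq_trans (leq_addr _ _) h).
  by rewrite ltnn.
under eq_bigr => w _ do rewrite PE eval2_g2 /=.
rewrite big_ord_recl /= mulr0 addr0.
under eq_bigr => j _ do rewrite /bump leq0n add1n.
set SP := \sum_(j < d.+1) P.[s + A * (j.+1)%:R] ^+ 2.
have HP := HI P sP.
have T1 : - (l0 * `|s ^+ 2 - t ^+ 3|) * P.[s] ^+ 2 <= l0 * (s ^+ 2 - t ^+ 3) * P.[s] ^+ 2.
  apply: ler_wpM2r; first exact: sqr_ge0.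
  rewrite -mulrN; apply: ler_wpM2l => //; rewrite lerNl -normrN; exact: ler_norm.
have T2 : l1 * (A ^+ 2 - t ^+ 3) * SP <=
   \sum_(i < d.+1) l1 * ((s + A * (i.+1)%:R) ^+ 2 - t ^+ 3) * P.[s + A * (i.+1)%:R] ^+ 2.
  rewrite /SP mulr_sumr; apply: ler_sum => j _; apply: ler_wpM2r; first exact: sqr_ge0.
  apply: ler_wpM2l => //; rewrite lerD2r.
  have h1 : 1 <= (j.+1)%:R :> R by rewrite ler1n.
  have h2 : A <= s + A * (j.+1)%:R by nra.
  nra.
have SP0 : 0 <= SP by apply: sumr_ge0 => j _; apply: sqr_ge0.
have G0 : 0 <= l0 * `|s ^+ 2 - t ^+ 3| by apply: mulr_ge0.
have T3 : l0 * `|s ^+ 2 - t ^+ 3| * P.[s] ^+ 2 <= l0 * `|s ^+ 2 - t ^+ 3| * (L * SP).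
  by apply: ler_wpM2l.
have T4 : l0 * (`|s ^+ 2 - t ^+ 3| * L) * SP <= l1 * (A ^+ 2 - t ^+ 3) * SP.
  by apply: ler_wpM2r.
nra.
Qed.

Lemma Omega_approx d (s t e : R) : 0 <= s -> 0 < e ->
  exists z, Omega d.+2 z /\ `|z.1 - s| < e /\ `|z.2 - t| < e.
Proof.
move=> s0 e0.
have [L [L0 HI]] := interp (ltn0Sn d).
pose G := `|s ^+ 2 - t ^+ 3|.
have G0 : 0 <= G by rewrite /G normr_ge0.
pose B := G * L + 1.
have B0 : 0 < B by rewrite /B; apply: ltr_wpDl; [apply: mulr_ge0 | apply: ltr01].
pose K : R := (d.+1 * d.+2)%:R.
have K0 : 0 <= K by rewrite /K ler0n.
pose A := 2 * B * K / e + 2 * t ^+ 2 + 2.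
have BKe : 0 <= 2 * B * K / e by apply: divr_ge0 => //; [apply: mulr_ge0 => //; apply: mulr_ge0 => //; apply: ltW|apply: ltW].
have t2 : 0 <= t ^+ 2 by apply: sqr_ge0.
have A2 : 2 <= A by rewrite /A; lra.
have A0 : 0 < A by lra.
have At : 2 * t ^+ 3 <= A ^+ 2.
  have h := sqr_ge0 (t ^+ 2 - t).
  have h2 : 2 * t ^+ 2 + 2 <= A by rewrite /A; lra.
  have h3 : (2 * t ^+ 2 + 2) ^+ 2 <= A ^+ 2.
    rewrite !expr2; apply: ler_pM => //; lra.
  nra.
pose mu := 2 * B / A ^+ 2.
have muA : mu * A ^+ 2 = 2 * B by rewrite /mu divfK // expf_neq0 // lt0r_neq0.
have mu0 : 0 <= mu by rewrite /mu; apply: divr_ge0; [lra | apply: sqr_ge0].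
pose l0 := (1 + (d.+1)%:R * mu)^-1.
have D0 : 0 < 1 + (d.+1)%:R * mu by apply: ltr_wpDr; [apply: mulr_ge0 | apply: ltr01].
have l0D : l0 * (1 + (d.+1)%:R * mu) = 1 by rewrite /l0 mulVf // lt0r_neq0.
have l00 : 0 < l0 by rewrite /l0 invr_gt0.
pose l1 := mu * l0.
have l10 : 0 <= l1 by apply: mulr_ge0 => //; apply: ltW.
have l1mu : l1 <= mu.
  rewrite /l1 -[X in _ <= X]mulr1; apply: ler_wpM2l => //.
  have : 1 <= 1 + (d.+1)%:R * mu by rewrite lerDl; apply: mulr_ge0.
  move=> h; rewrite -l0D -[X in X <= _]mulr1; apply: ler_wpM2l; [apply: ltW|] => //.
pose lam := fun w : 'I_d.+2 => if (w : nat) == 0%N then l0 else l1.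
pose pt := fun w : 'I_d.+2 => (s + A * (w : nat)%:R, t).
pose y := @mom d.+2 lam pt.
have lam0 w : 0 <= lam w by rewrite /lam; case: eqP => _ //; apply: ltW.
have slam : \sum_w lam w = 1.
  rewrite big_ord_recl /lam /=.
  by rewrite sumr_const card_ord -l0D /l1 -mulr_natl; ring.
exists (Ly y (X1 R), Ly y (X2 R)); split.
  exists y; split; first by rewrite Ly_mom; under eq_bigr do rewrite eval2_1 mulr1.
  split => //; split => //.
  have e1 : (d.+2 - 1 = d.+1)%N by rewrite subSS subn0.
  have e2 : (d.+2 - 2 = d)%N by rewrite !subSS subn0.
  rewrite e1 e2; split; [|split].
  - move=> v; rewrite momMx_atomic quad_atomic; apply: sumr_ge0 => w _.
    by apply: mulr_ge0 => //; apply: sqr_ge0.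
  - move=> v; rewrite locMx_atomic quad_atomic; apply: sumr_ge0 => w _.
    apply: mulr_ge0; last exact: sqr_ge0.
    rewrite eval2_X1; apply: mulr_ge0 => //=; apply: addr_ge0 => //; apply: mulr_ge0; [exact: ltW | exact: ler0n].
  - apply: (@psd_g2 d s t A l0 l1 L); [done | exact: ltW | exact: ltW | done | done | by move=> P sP; apply: HI | ].
    have h : B <= mu * (A ^+ 2 - t ^+ 3).
      have : 0 <= mu * (A ^+ 2 - 2 * t ^+ 3) by apply: mulr_ge0; lra.
      nra.
    have h2 : G * L <= mu * (A ^+ 2 - t ^+ 3) by apply: le_trans h; rewrite /B; lra.
    have eq : mu * l0 * (A ^+ 2 - t ^+ 3) = l0 * (mu * (A ^+ 2 - t ^+ 3)) by ring.
    rewrite /l1 eq; apply: ler_wpM2l => //; exact: ltW.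
rewrite /= !Ly_mom.
have -> : \sum_w lam w * eval2 (X2 R) (pt w) = t.
  under eq_bigr do rewrite eval2_X2 /=.
  by rewrite -mulr_suml slam mul1r.
rewrite subrr normr0; split => //.
have -> : \sum_w lam w * eval2 (X1 R) (pt w) - s = \sum_w lam w * (A * (w : nat)%:R).
  under eq_bigr do rewrite eval2_X1 /= mulrDr.
  by rewrite big_split /= -mulr_suml slam mul1r addrAC subrr add0r.
have E0 : 0 <= \sum_w lam w * (A * (w : nat)%:R).
  by apply: sumr_ge0 => w _; apply: mulr_ge0 => //; apply: mulr_ge0 => //; apply: ltW.
rewrite ger0_norm //.
have E1 : \sum_w lam w * (A * (w : nat)%:R) <= \sum_(w < d.+2) l1 * (A * (d.+1)%:R).
  apply: ler_sum => w _; rewrite /lam; case: eqP => [->|_].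
    by rewrite mulr0 mulr0; apply: mulr_ge0 => //; apply: mulr_ge0 => //; apply: ltW.
  apply: ler_wpM2l => //; apply: ler_wpM2l; first exact: ltW.
  by rewrite ler_nat -ltnS.
rewrite sumr_const card_ord in E1.
have E2 : l1 * (A * (d.+1)%:R) *+ d.+2 = l1 * A * K.
  by rewrite /K natrM -mulr_natr; ring.
rewrite E2 in E1.
apply: le_lt_trans E1 _.
have h1 : l1 * A * K <= mu * A * K.
  by apply: ler_wpM2r => //; apply: ler_wpM2r => //; apply: ltW.
apply: le_lt_trans h1 _.
have eA : e * A = 2 * B * K + e * (2 * t ^+ 2 + 2).
  by rewrite /A; field; exact: lt0r_neq0.
have h3 : mu * A * K * A = 2 * B * K by rewrite -muA; ring.
have h4 : 0 < e * (2 * t ^+ 2 + 2) by apply: mulr_gt0 => //; lra.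
nra.
Qed.

Lemma clOmega k x : (2 <= k)%N -> cl2 (@Omega R k) x <-> halfplane x.
Proof.
move=> k2; split.
  move=> H; rewrite /halfplane; case: (lerP 0 x.1) => // hneg; exfalso.
  have [z [Oz [h1 _]]] := H (- x.1) ltac:(by rewrite oppr_gt0).
  have := Omega_half Oz; move: h1; rewrite ltr_norml => /andP [h1 h2]; lra.
move=> hx e he.
case: k k2 => [|[|d]] // _.
exact: (@Omega_approx d x.1 x.2 e hx he).
Qed.

Lemma notcl (z : R * R) : Sset z -> `|z.1 - 0| < 1 / 4 -> `|z.2 - 1| < 1 / 4 -> False.
Proof.
case=> [h0 hg]; rewrite !ltr_norml => /andP [a1 a2] /andP [b1 b2].
have z2 : 3 / 4 < z.2 by lra.
have z1 : z.1 < 1 / 4 by lra.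
have h3 : (3 / 4) ^+ 3 < z.2 ^+ 3 by rewrite ltrXn2r //; lra.
have h4 : z.1 ^+ 2 < (1 / 4) ^+ 2 by rewrite ltrXn2r //; lra.
move: h3 h4; rewrite !expr2 !exprS expr0 !mulr1; lra.
Qed.
End S.

Unset Implicit Arguments.

Theorem mainTheorem16 (R : rcfType) :
  (forall k : nat, (1 <= k)%N -> forall x : R * R, TH k (G R) x <-> halfplane x) /\
  (forall k : nat, (2 <= k)%N -> forall x : R * R, cl2 (@Omega R k) x <-> halfplane x) /\
  (forall x : R * R, conv2 (@Sset R) x <-> Sset x) /\
  ~ (forall x : R * R, Sset x <-> halfplane x) /\
  (forall k : nat, (1 <= k)%N ->
     ~ (forall x : R * R, TH k (G R) x <-> cl2 (conv2 (@Sset R)) x)) /\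
  (forall k : nat, (2 <= k)%N ->
     ~ (forall x : R * R, cl2 (@Omega R k) x <-> cl2 (conv2 (@Sset R)) x)).
Proof.
have h01 : halfplane ((0 : R), (1 : R)) by rewrite /halfplane.
have q0 : (0 : R) < 1 / 4 by rewrite divr_gt0 // ltr0n.
split; first by move=> k k1 x; exact: TH_half.
split; first by move=> k k2 x; exact: clOmega.
split; first by move=> x; exact: conv2S.
split.
  move=> H; have [_ /(_ h01)] := H (0, 1); rewrite /Sset /= expr0n /= expr1n add0r.
  by case=> _; rewrite oppr_ge0 leNgt ltr01.
split.
  move=> k k1 H; have [/(_ _) h _] := H (0, 1).
  have [z [cz [h1 h2]]] := h ((TH_half _ k1).2 h01) _ q0.
  exact: (notcl ((conv2S z).1 cz) h1 h2).
move=> k k2 H; have [/(_ _) h _] := H (0, 1).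
have [z [cz [h1 h2]]] := h ((clOmega _ k2).2 h01) _ q0.
exact: (notcl ((conv2S z).1 cz) h1 h2).
Qed.
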